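(* On $\mathcal H=\mathbb C^3$ with orthonormal basis $\{|0\rangle,|1\rangle,|2\rangle\}$, let $A_1=\tfrac14\big(2|0\rangle\langle0|+|2\rangle\langle2|+\sqrt2(|0\rangle\langle2|+|2\rangle\langle0|)\big)$, $A_2=I-A_1$, $B_1=\tfrac12\big(2|0\rangle\langle0|+|2\rangle\langle2|\big)$, $B_2=I-B_1$. Then there is no POVM $\{G_\lambda\}_\lambda$ with $\|G_\lambda\|=1$ for all $\lambda$ such that both $\{A_a\}$ and $\{B_b\}$ are classical post-processings of $\{G_\lambda\}$; consequently the set $\{\{A_a\},\{B_b\}\}$ allows for a proof of contextuality of quantum theory.
   Context: $\|\cdot\|$ is the operator norm. A classical post-processing of $\{G_\lambda\}$ is a POVM $A_k=\sum_\lambda p(k|\lambda)G_\lambda$ with $p(\cdot|\lambda)$ probability distributions. A set of observables $\mathcal A$ allows for a proof of contextuality of quantum theory if there do not exist a POVM $\{G_\lambda\}$ and states $\{\sigma_\lambda\}$ (finite index set) with $A_k=\sum_\lambda\mathrm{tr}[\sigma_\lambda A_k]G_\lambda$ for all $\{A_k\}\in\mathcal A$ and all $k$. *)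

(* Defs.v *)
(* the Hilbert space C^3 is 'cV[R[i]]_3 with R : realType
   (so R[i] is the complex numbers), operators are 'M[R[i]]_3. *)
From mathcomp Require Import all_boot all_order all_algebra.
From mathcomp Require Import reals.
From mathcomp Require Export complex.
Set Implicit Arguments. Unset Strict Implicit. Unset Printing Implicit Defensive.
Import GRing.Theory Num.Theory.
Local Open Scope ring_scope.

Section Defs.
Variable R : realType.
Local Notation C := R[i].

Definition adjoint {m n} (A : 'M[C]_(m, n)) : 'M[C]_(n, m) := (map_mx Num.conj A)^T.

Definition vnorm {d} (v : 'cV[C]_d) : C := sqrtC (\sum_i `|v i 0| ^+ 2).

Definition is_opnorm {d} (A : 'M[C]_d) (t : C) : Prop :=
  (forall v : 'cV[C]_d, vnorm (A *m v) <= t * vnorm v) /\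
  (forall s : C, (forall v : 'cV[C]_d, vnorm (A *m v) <= s * vnorm v) -> t <= s).

Definition psd {d} (A : 'M[C]_d) : Prop :=
  adjoint A = A /\ forall v : 'cV[C]_d, 0 <= (adjoint v *m A *m v) 0 0.

Definition is_state {d} (s : 'M[C]_d) : Prop := psd s /\ \tr s = 1.

Definition is_POVM {d n} (G : 'I_n -> 'M[C]_d) : Prop :=
  (forall l, psd (G l)) /\ \sum_l G l = 1%:M.

Definition post_processing {d m n} (A : 'I_m -> 'M[C]_d) (G : 'I_n -> 'M[C]_d) : Prop :=
  exists p : 'I_m -> 'I_n -> C,
    (forall k l, 0 <= p k l) /\ (forall l, \sum_k p k l = 1) /\
    (forall k, A k = \sum_l p k l *: G l).

Definition observable d := {m : nat & 'I_m -> 'M[C]_d}.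

Definition allows_contextuality {d} (Obs : observable d -> Prop) : Prop :=
  ~ exists n (G : 'I_n -> 'M[C]_d) (sigma : 'I_n -> 'M[C]_d),
      is_POVM G /\ (forall l, is_state (sigma l)) /\
      forall O, Obs O -> forall k,
        projT2 O k = \sum_l \tr (sigma l *m projT2 O k) *: G l.

Definition i0 : 'I_3 := @Ordinal 3 0 isT.
Definition i2 : 'I_3 := @Ordinal 3 2 isT.

Definition A1 : 'M[C]_3 :=
  4^-1 *: (2 *: delta_mx i0 i0 + delta_mx i2 i2
           + sqrtC 2 *: (delta_mx i0 i2 + delta_mx i2 i0)).
Definition A2 : 'M[C]_3 := 1%:M - A1.
Definition B1 : 'M[C]_3 := 2^-1 *: (2 *: delta_mx i0 i0 + delta_mx i2 i2).
Definition B2 : 'M[C]_3 := 1%:M - B1.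

Definition Aobs : 'I_2 -> 'M[C]_3 := fun a => if val a == 0%N then A1 else A2.
Definition Bobs : 'I_2 -> 'M[C]_3 := fun b => if val b == 0%N then B1 else B2.

End Defs.

(* Main.v *)
Require Import Defs.
From mathcomp Require Import all_boot all_order all_algebra.
From mathcomp Require Import reals complex.
From mathcomp Require Import ring.
Import Order.TTheory GRing.Theory Num.Theory.
Local Open Scope ring_scope.

Section Work.
Context {R : realType}.
Local Notation C := R[i].

Definition i1 : 'I_3 := @Ordinal 3 1 isT.

Lemma sum3 (F : 'I_3 -> C) : \sum_i F i = F (i0) + F i1 + F (i2).
Proof.
rewrite !big_ord_recr big_ord0 /= add0r.
by congr (F _ + F _ + F _); apply: val_inj.
Qed.

Lemma ord3P (P : 'I_3 -> Prop) : P (i0) -> P i1 -> P (i2) -> forall i, P i.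
Proof.
move=> h0 h1 h2 [[|[|[|k]]] Hk] //.
- by have -> : Ordinal Hk = i0 by apply: val_inj.
- by have -> : Ordinal Hk = i1 by apply: val_inj.
- by have -> : Ordinal Hk = i2 by apply: val_inj.
Qed.

Definition qf (M : 'M[C]_3) (v : 'cV[C]_3) : C := (adjoint v *m M *m v) 0 0.

Lemma qfE M v : qf M v = \sum_i \sum_j (v i 0)^* * M i j * v j 0.
Proof.
rewrite /qf /adjoint mxE.
rewrite exchange_big /=; apply: eq_bigr => j _.
rewrite mxE mulr_suml; apply: eq_bigr => i _.
by rewrite !mxE.
Qed.

Lemma adjointE m n (A : 'M[C]_(m, n)) i j : adjoint A i j = (A j i)^*.
Proof. by rewrite !mxE. Qed.

Lemma adjoint_mul m n p (A : 'M[C]_(m, n)) (B : 'M[C]_(n, p)) :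
  adjoint (A *m B) = adjoint B *m adjoint A.
Proof. by rewrite /adjoint map_mxM trmx_mul. Qed.

Lemma adjointB m n (A B : 'M[C]_(m, n)) : adjoint (A - B) = adjoint A - adjoint B.
Proof. by apply/matrixP => i j; rewrite !mxE rmorphB. Qed.

Lemma adjointZ m n (a : C) (A : 'M[C]_(m, n)) : adjoint (a *: A) = a^* *: adjoint A.
Proof. by apply/matrixP => i j; rewrite !mxE rmorphM. Qed.

Lemma normsq_ge0 (w : 'cV[C]_3) : 0 <= (adjoint w *m w) 0 0.
Proof.
rewrite mxE; apply: sumr_ge0 => i _; rewrite !mxE mulrC; exact: mul_conjC_ge0.
Qed.

Lemma normsq_eq0 (w : 'cV[C]_3) : (adjoint w *m w) 0 0 = 0 -> w = 0.
Proof.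
rewrite mxE => H; apply/matrixP => i j.
have -> : j = 0 by apply: ord1.
have Hp : forall k : 'I_3, xpredT k -> 0 <= adjoint w 0 k * w k 0.
  by move=> k _; rewrite !mxE mulrC; exact: mul_conjC_ge0.
have := psumr_eq0P Hp H (i := i) isT.
rewrite !mxE mulrC => /eqP.
by rewrite mul_conjC_eq0 => /eqP ->.
Qed.


Lemma entry4 (X Y Z W : 'M[C]_1) a b c :
  (X - a *: Y - b *: Z + c *: W) 0 0 = X 0 0 - a * Y 0 0 - b * Z 0 0 + c * W 0 0.
Proof. by rewrite !mxE. Qed.

Lemma psd_ker (G : 'M[C]_3) v : psd G -> qf G v = 0 -> G *m v = 0.
Proof.
case=> Hh Hpos Hq.
set w := G *m v.
set N := (adjoint w *m w) 0 0.
set Q := qf G w.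
have HN : 0 <= N by apply: normsq_ge0.
have HQ : 0 <= Q by apply: Hpos.
have Hc1 : adjoint v *m G *m w = adjoint w *m w by rewrite /w adjoint_mul Hh.
have Hc2 : adjoint w *m G *m v = adjoint w *m w by rewrite -mulmxA.
have HQ1 : 0 < Q + 1 by rewrite ltr_wpDl.
set s := N / (Q + 1).
have Hs : 0 <= s by rewrite divr_ge0 // ltW.
have cs : s^* = s by apply: geC0_conj.
have E : adjoint (v - s *: w) *m G *m (v - s *: w) =
   adjoint v *m G *m v - s *: (adjoint v *m G *m w) - s *: (adjoint w *m G *m v)
   + (s * s) *: (adjoint w *m G *m w).
  rewrite adjointB adjointZ cs !mulmxBl !mulmxBr -!scalemxAl -!scalemxAr scalerA.
  by rewrite opprD opprK addrA.
have := Hpos (v - s *: w).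
rewrite E Hc1 Hc2 entry4.
rewrite -/(qf G v) Hq -/(qf G w) -/Q -/N => H.
apply: normsq_eq0; rewrite -/N.
apply/eqP; apply: contraLR H => HN0.
have HNp : 0 < N by rewrite lt_def HN0 HN.
apply/negP => Hle.
suff : 0 - s * N - s * N + s * s * Q < 0 by move/lt_geF; rewrite Hle.
have -> : 0 - s * N - s * N + s * s * Q = - (N ^+ 2 * (Q + 2) / (Q + 1) ^+ 2).
  rewrite /s; field; by rewrite lt0r_neq0.
rewrite oppr_lt0 divr_gt0 ?exprn_gt0 // mulr_gt0 ?exprn_gt0 //.
by rewrite ltr_wpDl.
Qed.


Definition s2 : C := sqrtC 2.
Lemma s2sq : s2 ^+ 2 = 2. Proof. exact: sqrtCK. Qed.
Lemma s2ge0 : 0 <= s2. Proof. by rewrite sqrtC_ge0 ler0n. Qed.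
Lemma s2c : s2^* = s2. Proof. exact: geC0_conj s2ge0. Qed.
Lemma s2s2 : s2 * s2 = 2. Proof. by rewrite -expr2 s2sq. Qed.

Definition col3 (a b c : C) : 'cV[C]_3 := \col_(i < 3) nth 0 [:: a; b; c] i.
Lemma col3E0 a b c : col3 a b c i0 0 = a. Proof. by rewrite mxE. Qed.
Lemma col3E1 a b c : col3 a b c i1 0 = b. Proof. by rewrite mxE. Qed.
Lemma col3E2 a b c : col3 a b c i2 0 = c. Proof. by rewrite mxE. Qed.

Definition P (w : 'cV[C]_3) : 'M[C]_3 := w *m adjoint w.
Lemma PE w i j : P w i j = w i 0 * (w j 0)^*.
Proof. by rewrite mxE big_ord1 !mxE. Qed.

Definition e0 := col3 1 0 0.
Definition e1 := col3 0 1 0.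
Definition e2 := col3 0 0 1.
Definition wv := col3 s2 0 1.
Definition u2 := col3 1 0 (- s2).
Definition xv := col3 1 0 s2.

Lemma A1P : A1 R = 4^-1 *: P wv.
Proof.
apply/matrixP; apply: ord3P; apply: ord3P;
  rewrite [RHS]mxE PE /wv !mxE /= -/s2 ?conjC0 ?conjC1 ?s2c ?s2s2; ring.
Qed.

Lemma B1P : B1 R = P e0 + 2^-1 *: P e2.
Proof.
apply/matrixP; apply: ord3P; apply: ord3P;
  rewrite [RHS]mxE [X in X + _]PE [X in _ + X]mxE PE /e0 /e2 !mxE /= ?conjC0 ?conjC1; field; done.
Qed.

Lemma B2P : B2 R = P e1 + 2^-1 *: P e2.
Proof.
apply/matrixP; apply: ord3P; apply: ord3P;
  rewrite [RHS]mxE [X in X + _]PE [X in _ + X]mxE PE /e1 /e2 !mxE /= ?conjC0 ?conjC1; field; done.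
Qed.


Lemma qfP w v : qf (P w) v = (adjoint v *m w) 0 0 * (adjoint w *m v) 0 0.
Proof. by rewrite /qf /P !mulmxA -[_ *m _ *m v]mulmxA mxE big_ord1. Qed.

Lemma ip3 (v w : 'cV[C]_3) :
  (adjoint v *m w) 0 0 = (v i0 0)^* * w i0 0 + (v i1 0)^* * w i1 0 + (v i2 0)^* * w i2 0.
Proof. by rewrite mxE sum3 !adjointE. Qed.

Lemma qfD (A B : 'M[C]_3) v : qf (A + B) v = qf A v + qf B v.
Proof. by rewrite /qf mulmxDr mulmxDl mxE. Qed.

Lemma qfZ c (A : 'M[C]_3) v : qf (c *: A) v = c * qf A v.
Proof. by rewrite /qf -scalemxAr -scalemxAl mxE. Qed.

Lemma qf_sum n (c : 'I_n -> C) (G : 'I_n -> 'M[C]_3) v :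
  qf (\sum_l c l *: G l) v = \sum_l c l * qf (G l) v.
Proof.
rewrite /qf mulmx_sumr mulmx_suml summxE; apply: eq_bigr => l _.
by rewrite -scalemxAr -scalemxAl mxE.
Qed.

Lemma trP (S : 'M[C]_3) w : \tr (S *m P w) = qf S w.
Proof. by rewrite /P mulmxA mxtrace_mulC trace_mx11 /qf mulmxA. Qed.

Lemma trDZ (S A B : 'M[C]_3) c : \tr (S *m (A + c *: B)) = \tr (S *m A) + c * \tr (S *m B).
Proof. by rewrite mulmxDr -scalemxAr mxtraceD mxtraceZ. Qed.

Lemma s2cN : (- s2)^* = - s2. Proof. by rewrite rmorphN; congr (- _); exact: s2c. Qed.

Ltac cmp := rewrite qfP !ip3 /e0 /e1 /e2 /wv /u2 /xv !mxE /= ?conjC0 ?conjC1 ?s2cN ?s2c.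

Lemma qW_e1 : qf (P wv) e1 = 0. Proof. cmp; ring. Qed.
Lemma qW_u2 : qf (P wv) u2 = 0. Proof. cmp; ring. Qed.
Lemma qW_x : qf (P wv) xv = 8. Proof. cmp; transitivity (4 * (s2 * s2)); [ring | rewrite s2s2; ring]. Qed.
Lemma qW_e0 : qf (P wv) e0 = 2. Proof. cmp; transitivity (s2 * s2); [ring | by rewrite s2s2]. Qed.
Lemma q1_e0 : qf (P e1) e0 = 0. Proof. cmp; ring. Qed.
Lemma q2_e0 : qf (P e2) e0 = 0. Proof. cmp; ring. Qed.
Lemma q0_x : qf (P e0) xv = 1. Proof. cmp; ring. Qed.
Lemma q2_x : qf (P e2) xv = 2. Proof. cmp; transitivity (s2 * s2); [ring | by rewrite s2s2]. Qed.


Lemma qA1_e1 : qf (A1 R) e1 = 0. Proof. by rewrite A1P qfZ qW_e1 mulr0. Qed.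
Lemma qA1_u2 : qf (A1 R) u2 = 0. Proof. by rewrite A1P qfZ qW_u2 mulr0. Qed.
Lemma qA1_x : qf (A1 R) xv = 2. Proof. rewrite A1P qfZ qW_x; field; done. Qed.
Lemma qB2_e0 : qf (B2 R) e0 = 0. Proof. by rewrite B2P qfD qfZ q1_e0 q2_e0 mulr0 addr0. Qed.
Lemma qB1_x : qf (B1 R) xv = 2. Proof. rewrite B1P qfD qfZ q0_x q2_x; field; done. Qed.

Lemma conj_s2M x : (s2 * x)^* = s2 * x^*.
Proof. by rewrite rmorphM; congr (_ * _); exact: s2c. Qed.

Lemma struct (G : 'M[C]_3) : psd G -> G *m e1 = 0 -> G *m u2 = 0 ->
  G = G i2 i2 *: P wv.
Proof.
case=> Hh _ He1 Hu2.
have h1 i : G i i1 = 0.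
  have := congr1 (fun M : 'M[C]_(3,1) => M i 0) He1; rewrite /= mxE sum3 /e1 !mxE /=.
  by rewrite !mulr0 mulr1 add0r addr0.
have h2 i : G i i0 = s2 * G i i2.
  have := congr1 (fun M : 'M[C]_(3,1) => M i 0) Hu2; rewrite /= mxE sum3 /u2 !mxE /= => H.
  by move/eqP: H; rewrite mulr1 mulr0 addr0 mulrN subr_eq0 mulrC => /eqP.
have hh i j : G i j = (G j i)^*.
  by rewrite -{1}Hh adjointE.
apply/matrixP; apply: ord3P; apply: ord3P;
  rewrite [RHS]mxE PE /wv !mxE /= ?conjC0 ?conjC1 ?s2c.
all: first
  [ rewrite (h2 i0) (hh i0 i2) (h2 i2) conj_s2M -(hh i2 i2); ring
  | rewrite (hh i0 i2) (h2 i2) conj_s2M -(hh i2 i2); ring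
  | rewrite (h2 i1) (hh i1 i2) (h1 i2) conjC0; ring
  | rewrite (hh i1 i2) (h1 i2) conjC0; ring
  | rewrite (h2 i2); ring
  | rewrite h1; ring
  | ring ].
Qed.


Lemma qf_e0 (G : 'M[C]_3) : qf G e0 = G i0 i0.
Proof. rewrite qfE !sum3 /e0 !mxE /= ?conjC0 ?conjC1; ring. Qed.
Lemma qf_e1 (G : 'M[C]_3) : qf G e1 = G i1 i1.
Proof. rewrite qfE !sum3 /e1 !mxE /= ?conjC0 ?conjC1; ring. Qed.
Lemma qf_e2 (G : 'M[C]_3) : qf G e2 = G i2 i2.
Proof. rewrite qfE !sum3 /e2 !mxE /= ?conjC0 ?conjC1; ring. Qed.

Lemma conjD (x y : C) : (x + y)^* = x^* + y^*. Proof. exact: rmorphD. Qed.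
Lemma conjB (x y : C) : (x - y)^* = x^* - y^*. Proof. exact: rmorphB. Qed.
Lemma conjN (x : C) : (- x)^* = - x^*. Proof. exact: rmorphN. Qed.
Lemma conjM (x y : C) : (x * y)^* = x^* * y^*. Proof. exact: rmorphM. Qed.

Lemma cs_ineq (a b c : C) :
  `|s2 * a + c| ^+ 2 <= 3 * (`|a| ^+ 2 + `|b| ^+ 2 + `|c| ^+ 2).
Proof.
have E : `|s2 * a + c| ^+ 2 + `|a - s2 * c| ^+ 2 = 3 * (`|a| ^+ 2 + `|c| ^+ 2).
  rewrite !normCK !conjD !conjN !conjM s2c.
  transitivity ((s2 * s2 + 1) * (a * a^* + c * c^*)); first ring.
  rewrite s2s2; ring.
apply: (le_trans (y := 3 * (`|a| ^+ 2 + `|c| ^+ 2))).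
  by rewrite -E lerDl exprn_ge0 // normr_ge0.
rewrite ler_pM2l ?ltr0n // addrAC lerDl exprn_ge0 // normr_ge0.
Qed.


Lemma norm_lb d : 0 <= d -> is_opnorm (d *: P wv) 1 -> 1 <= 3 * d.
Proof.
move=> Hd [_ Hmin]; apply: Hmin => v.
set M := adjoint wv *m v.
set t := M 0 0.
have Ev : (d *: P wv) *m v = (d * t) *: wv.
  apply/matrixP => i j; rewrite (ord1 j).
  rewrite -scalemxAl /P -mulmxA -/M.
  rewrite [LHS]mxE [RHS]mxE [(wv *m M) _ _]mxE big_ord1 -/t; ring.
rewrite Ev /vnorm.
have Hv0 : 0 <= \sum_i `|v i 0| ^+ 2 by apply: sumr_ge0 => i _; rewrite exprn_ge0 // normr_ge0.
have -> : \sum_i `|((d * t) *: wv) i 0| ^+ 2 = 3 * (d ^+ 2 * `|t| ^+ 2).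
  rewrite sum3 !mxE /= !normrM normr0 normr1 (ger0_norm Hd) (ger0_norm s2ge0) !exprMn s2sq.
  ring.
have H3d : 0 <= 3 * d by rewrite mulr_ge0 // ler0n.
rewrite -(sqrCK H3d) -sqrtCM ?ler_sqrtC.
- have Ht : t = s2 * v i0 0 + v i2 0.
    rewrite /t /M ip3 /wv !mxE /= s2c conjC0 conjC1; ring.
  have HS : \sum_i `|v i 0| ^+ 2 = `|v i0 0| ^+ 2 + `|v i1 0| ^+ 2 + `|v i2 0| ^+ 2.
    by rewrite sum3.
  have := cs_ineq (v i0 0) (v i1 0) (v i2 0); rewrite -Ht -HS => Hc.
  have -> : (3 * d) ^+ 2 * \sum_i `|v i 0| ^+ 2 = 3 * (d ^+ 2 * (3 * \sum_i `|v i 0| ^+ 2)).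
    ring.
  by rewrite ler_wpM2l ?ler0n // ler_wpM2l // exprn_ge0.
all: rewrite qualifE /=.
- by rewrite mulr_ge0 ?ler0n // mulr_ge0 ?exprn_ge0 ?normr_ge0.
- by rewrite mulr_ge0 // exprn_ge0.
- by rewrite exprn_ge0.
- by [].
Qed.


Lemma ker_term n (c : 'I_n -> C) (G : 'I_n -> 'M[C]_3) v l :
  (forall l, 0 <= c l) -> (forall l, psd (G l)) ->
  qf (\sum_l c l *: G l) v = 0 -> c l != 0 -> qf (G l) v = 0.
Proof.
move=> Hc HG; rewrite qf_sum => H Hl.
have Hp : forall k, xpredT k -> 0 <= c k * qf (G k) v.
  by move=> k _; rewrite mulr_ge0 // (HG k).2.
have := psumr_eq0P Hp H (i:=l) isT.
by move/eqP; rewrite mulf_eq0 (negbTE Hl) /= => /eqP.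
Qed.

Lemma term_le n (F : 'I_n -> C) l : (forall k, 0 <= F k) -> F l <= \sum_k F k.
Proof.
move=> HF; rewrite (bigD1 l) //= lerDl; apply: sumr_ge0 => k _; exact: HF.
Qed.

Lemma state_e0 (S : 'M[C]_3) : is_state S -> S *m e1 = 0 -> S *m e2 = 0 ->
  qf S wv = 2 /\ qf S e0 = 1 /\ qf S e2 = 0.
Proof.
case=> [[Hh _] Htr] He1 He2.
have h1 i : S i i1 = 0.
  have := congr1 (fun M : 'M[C]_(3,1) => M i 0) He1; rewrite /= mxE sum3 /e1 !mxE /=.
  by rewrite !mulr0 mulr1 add0r addr0.
have h2 i : S i i2 = 0.
  have := congr1 (fun M : 'M[C]_(3,1) => M i 0) He2; rewrite /= mxE sum3 /e2 !mxE /=.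
  by rewrite !mulr0 mulr1 !add0r.
have hh i j : S i j = (S j i)^*.
  by rewrite -{1}Hh adjointE.
have h1' j : S i1 j = 0 by rewrite hh h1 conjC0.
have h2' j : S i2 j = 0 by rewrite hh h2 conjC0.
have H00 : S i0 i0 = 1.
  by move: Htr; rewrite /mxtrace sum3 h1 h2 !addr0.
split; last split.
- rewrite qfE !sum3 !h1 !h2 !h1' !h2' H00 /wv !mxE /= s2c.
  transitivity (s2 * s2); [ring | by rewrite s2s2].
- by rewrite qf_e0.
- by rewrite qf_e2 h2.
Qed.

Lemma trA1 S : \tr (S *m A1 R) = 4^-1 * qf S wv.
Proof. by rewrite A1P -scalemxAr mxtraceZ trP. Qed.
Lemma trB1 S : \tr (S *m B1 R) = qf S e0 + 2^-1 * qf S e2.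
Proof. by rewrite B1P trDZ !trP. Qed.
Lemma trB2 S : \tr (S *m B2 R) = qf S e1 + 2^-1 * qf S e2.
Proof. by rewrite B2P trDZ !trP. Qed.

Lemma sum2 (F : 'I_2 -> C) : \sum_i F i = F (@Ordinal 2 0 isT) + F (@Ordinal 2 1 isT).
Proof.
rewrite !big_ord_recr big_ord0 /= add0r.
by congr (F _ + F _); apply: val_inj.
Qed.


Lemma struct2 (G : 'M[C]_3) : psd G -> qf G e1 = 0 -> qf G u2 = 0 ->
  exists2 d, 0 <= d & G = d *: P wv.
Proof.
move=> HG H1 H2; exists (G i2 i2); first by rewrite -qf_e2 HG.2.
apply: struct => //; exact: psd_ker.
Qed.

End Work.

Theorem mainTheorem6 (R : realType) :
  (~ exists (n : nat) (G : 'I_n -> 'M[R[i]]_3),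
       is_POVM G /\ (forall l, is_opnorm (G l) 1) /\
       post_processing (Aobs R) G /\ post_processing (Bobs R) G) /\
  allows_contextuality
    (fun O : observable R 3 => O = existT _ 2%N (Aobs R) \/ O = existT _ 2%N (Bobs R)).
Proof.
pose a0 : 'I_2 := @Ordinal 2 0 isT.
pose a1 : 'I_2 := @Ordinal 2 1 isT.
split.
  move=> [n [G [[HGpsd _] [Hnorm [[p [Hp0 [Hp1 HpA]]] [q [Hq0 [Hq1 HqB]]]]]]]].
  have HA1 : A1 R = \sum_l p a0 l *: G l by exact: (HpA a0).
  have HB1 : B1 R = \sum_l q a0 l *: G l by exact: (HqB a0).
  have HB2 : B2 R = \sum_l q a1 l *: G l by exact: (HqB a1).
  case: (boolP [exists l, p a0 l != 0]) => [/existsP [l Hl] | /existsPn Hn]; last first.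
    have := @qA1_x R; rewrite HA1 qf_sum big1 => [/eqP|k _].
      by rewrite eq_sym pnatr_eq0.
    by have := Hn k; rewrite negbK => /eqP ->; rewrite mul0r.
  have K1 : qf (G l) e1 = 0.
    by apply: (@ker_term R n (p a0) G _ l (Hp0 a0) HGpsd _ Hl); rewrite -HA1 qA1_e1.
  have K2 : qf (G l) u2 = 0.
    by apply: (@ker_term R n (p a0) G _ l (Hp0 a0) HGpsd _ Hl); rewrite -HA1 qA1_u2.
  have [d Hd HGl] := @struct2 R (G l) (HGpsd l) K1 K2.
  have H3 : 1 <= 3 * d by apply: norm_lb => //; rewrite -HGl.
  have Hd0 : d != 0 by apply: contraTneq H3 => ->; rewrite mulr0 ler10.
  have Hq1l : q a1 l = 0.
    apply/eqP; apply: contraNT Hd0 => Hql.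
    have := @ker_term R n (q a1) G e0 l (Hq0 a1) HGpsd.
    rewrite -HB2 qB2_e0 => /(_ erefl Hql).
    by rewrite HGl qfZ qW_e0 => /eqP; rewrite mulf_eq0 pnatr_eq0 orbF.
  have Hq0l : q a0 l = 1.
    by have := Hq1 l; rewrite sum2 -/a0 -/a1 Hq1l addr0.
  have := @qB1_x R; rewrite HB1 qf_sum => Hs.
  have := @term_le R n (fun k => q a0 k * qf (G k) xv) l.
  rewrite Hs Hq0l mul1r HGl qfZ qW_x => Hle.
  have : 8 <= 6 :> R[i].
    apply: (le_trans (y := 3 * (d * 8))).
      have -> : 3 * (d * 8) = 8 * (3 * d) :> R[i] by ring.
      by rewrite -{1}(mulr1 8) ler_wpM2l ?ler0n.
    have -> : 6 = 3 * 2 :> R[i] by ring.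
    rewrite ler_wpM2l ?ler0n //; apply: Hle => k.
    by rewrite mulr_ge0 // (HGpsd k).2.
  by rewrite ler_nat.
move=> [n [G [S [[HGpsd _] [HS Hobs]]]]].
have HA1 : A1 R = \sum_l \tr (S l *m A1 R) *: G l.
  exact: (Hobs _ (or_introl erefl) a0).
have HB1 : B1 R = \sum_l \tr (S l *m B1 R) *: G l.
  exact: (Hobs _ (or_intror erefl) a0).
have HB2 : B2 R = \sum_l \tr (S l *m B2 R) *: G l.
  exact: (Hobs _ (or_intror erefl) a1).
have Hqf l v : 0 <= qf (S l) v := (HS l).1.2 v.
have Hc l : 0 <= \tr (S l *m A1 R).
  by rewrite trA1 mulr_ge0 // invr_ge0 ler0n.
have Hr l : 0 <= \tr (S l *m B1 R).
  by rewrite trB1 addr_ge0 // mulr_ge0 // invr_ge0 ler0n.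
have Ht l : 0 <= \tr (S l *m B2 R).
  by rewrite trB2 addr_ge0 // mulr_ge0 // invr_ge0 ler0n.
have Hterm l : \tr (S l *m A1 R) * qf (G l) xv <=
               2^-1 * (\tr (S l *m B1 R) * qf (G l) xv).
  have HGx : 0 <= qf (G l) xv := (HGpsd l).2 xv.
  case: (eqVneq (\tr (S l *m A1 R)) 0) => [->|Hl].
    by rewrite mul0r mulr_ge0 // ?invr_ge0 ?ler0n // mulr_ge0.
  have K1 : qf (G l) e1 = 0.
    by apply: (@ker_term R n _ G _ l Hc HGpsd _ Hl); rewrite -HA1 qA1_e1.
  have K2 : qf (G l) u2 = 0.
    by apply: (@ker_term R n _ G _ l Hc HGpsd _ Hl); rewrite -HA1 qA1_u2.
  have [d Hd HGl] := @struct2 R (G l) (HGpsd l) K1 K2.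
  case: (eqVneq d 0) => [d0|Hd0].
    by rewrite HGl d0 qfZ !mul0r !mulr0.
  have Htl : \tr (S l *m B2 R) = 0.
    apply/eqP; apply: contraNT Hd0 => Hql.
    have := @ker_term R n _ G e0 l Ht HGpsd.
    rewrite -HB2 qB2_e0 => /(_ erefl Hql).
    by rewrite HGl qfZ qW_e0 => /eqP; rewrite mulf_eq0 pnatr_eq0 orbF.
  move: Htl; rewrite trB2 => /eqP.
  rewrite paddr_eq0 ?mulr_ge0 ?invr_ge0 ?ler0n // mulf_eq0 invr_eq0 pnatr_eq0 /=.
  case/andP => /eqP Q1 /eqP Q2.
  have [W1 [W2 W3]] := @state_e0 R (S l) (HS l) (@psd_ker R _ _ (HS l).1 Q1) (@psd_ker R _ _ (HS l).1 Q2).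
  rewrite trA1 trB1 W1 W2 W3.
  have -> : 4^-1 * 2 * qf (G l) xv = 2^-1 * ((1 + 2^-1 * 0) * qf (G l) xv) :> R[i].
    by field.
  exact: lexx.
have := @qA1_x R; rewrite {1}HA1 qf_sum => E1.
have := @qB1_x R; rewrite {1}HB1 qf_sum => E2.
have : 2 <= 2^-1 * 2 :> R[i].
  rewrite -{1}E1 -{2}E2 mulr_sumr; apply: ler_sum => l _; exact: Hterm.
by rewrite mulVf ?pnatr_eq0 // lern1.
Qed.
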